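(* Let $t\ge0$ with $2t+1\le n$, and let $f\in\mathbf{SB}_n$ be of the form $f=\sigma_{2t+1}+\sum_{i=0}^{2t}\lambda_f(i)\sigma_i$ with $\lambda_f(i)\in\mathbb{F}_2$. Let $g=\sigma_1+\lambda_f(2t)+1$. Then $\deg(gf)\le 2t-1$ (for $t=0$ this means $gf=0$). Moreover: (a) if $\lambda_f(2t)=0$, then $(\sigma_1+1)f=0$ if $\lambda_f(2s)=0$ for all $0\le s\le t-1$, and otherwise $(\sigma_1+1)f$ has degree exactly $2s+1$, where $s$ is the largest index in $\{0,\dots,t-1\}$ with $\lambda_f(2s)=1$; (b) if $\lambda_f(2t)=1$, then $\sigma_1 f=0$ if $\lambda_f(2s)=\lambda_f(2s+1)$ for all $0\le s\le t-1$, and otherwise $\sigma_1f$ has degree exactly $2s+1$, where $s$ is the largest index in $\{0,\dots,t-1\}$ with $\lambda_f(2s)+\lambda_f(2s+1)=1$.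
   Context: $\mathbf{SB}_n$ is the set of symmetric Boolean functions on $n$ variables, $\sigma_i$ the $i$-th elementary symmetric function of $x_1,\dots,x_n$ over $\mathbb{F}_2$ ($\sigma_0=1$). Every $f\in\mathbf{SB}_n$ can be uniquely written $f=\sum_{i=0}^n\lambda_f(i)\sigma_i$ with $\lambda_f(i)\in\mathbb{F}_2$. $\deg$ is the algebraic degree (degree of the algebraic normal form). *)

(* Defs.v *)
From mathcomp Require Import all_boot.
Set Implicit Arguments. Unset Strict Implicit. Unset Printing Implicit Defensive.

Definition pt (n : nat) := {ffun 'I_n -> bool}.
Definition BF (n : nat) := {ffun pt n -> bool}.

Definition bf0 (n : nat) : BF n := [ffun _ => false].
Definition bf_const (n : nat) (b : bool) : BF n := [ffun _ => b].
Definition bf_add (n : nat) (f g : BF n) : BF n := [ffun x => f x (+) g x].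
Definition bf_mul (n : nat) (f g : BF n) : BF n := [ffun x => f x && g x].

Definition monom (n : nat) (S : {set 'I_n}) (x : pt n) : bool :=
  \big[andb/true]_(j in S) x j.

Definition sigma (n i : nat) : BF n :=
  [ffun x => \big[addb/false]_(S : {set 'I_n} | #|S| == i) monom S x].

Definition sym_comb (n : nat) (lam : nat -> bool) (m : nat) : BF n :=
  [ffun x => \big[addb/false]_(i < m) (lam i && sigma n i x)].

Definition ind (n : nat) (T : {set 'I_n}) : pt n := [ffun j => j \in T].

(* ANF coefficient of x^S in f (Moebius transform):
   f = sum_S anf f S * x^S, with anf f S = sum_{T subset S} f(1_T). *)
Definition anf (n : nat) (f : BF n) (S : {set 'I_n}) : bool :=
  \big[addb/false]_(T : {set 'I_n} | T \subset S) f (ind T).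

(* algebraic degree: largest |S| with a nonzero ANF coefficient
   (convention: 0 for the zero function; zero is stated separately) *)
Definition deg (n : nat) (f : BF n) : nat :=
  \max_(S : {set 'I_n} | anf f S) #|S|.

(* Main.v *)
Require Import Defs.
From mathcomp Require Import all_boot.
Set Implicit Arguments. Unset Strict Implicit. Unset Printing Implicit Defensive.

Lemma addb_card (T : finType) (P Q : pred T) :
  \big[addb/false]_(j | P j) Q j = odd #|[pred j | P j && Q j]|.
Proof.
have oM := @big_morph bool nat odd false addb 0 addn oddD (erefl false).
rewrite -sum1_card oM big_mkcondr /=.
by apply: eq_bigr => j _; case: (Q j).
Qed.

Lemma monomE n (S : {set 'I_n}) (x : pt n) :
  monom S x = (S \subset [set j | x j]).
Proof.
rewrite /monom big_andE; apply/forallP/subsetP => H j.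
  by move=> jS; rewrite inE; have := H j; rewrite jS.
by apply/implyP => /H; rewrite inE.
Qed.

Definition wt n (x : pt n) := #|[set j | x j]|.

Lemma sigmaE n i (x : pt n) : sigma n i x = odd 'C(wt x, i).
Proof.
rewrite ffunE /wt -cards_draws.
under eq_bigr do rewrite monomE.
rewrite addb_card; congr odd; apply: eq_card => S; rewrite !inE andbC.
by [].
Qed.

Lemma K1 w i : odd w && odd 'C(w, i) = if odd i then odd 'C(w, i) else odd 'C(w, i.+1).
Proof.
have [ltwi|leiw] := ltnP w i.
  rewrite (bin_small ltwi) (bin_small (leqW ltwi : w < i.+1)) andbF.
  by case: ifP.
have := congr1 odd (mul_bin_left w i); rewrite !oddM oddB //= .
by case: (odd i); case: (odd w); case: (odd 'C(w, i)) => //=; case: (odd 'C(w, i.+1)).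
Qed.

Definition Bs w (c : nat -> bool) m := \big[addb/false]_(i < m) (c i && odd 'C(w, i)).

Lemma Lodd w c k : odd w && Bs w c k.*2 = Bs w (fun i => odd i && (c i (+) c i.-1)) k.*2.
Proof.
elim: k => [|k IH]; first by rewrite /Bs !big_ord0 andbF.
rewrite doubleS /Bs !big_ord_recr /=.
rewrite /Bs in IH; rewrite !andb_addr IH.
rewrite !(andbCA (odd w)) !K1 /= odd_double /=.
by rewrite addbF andb_addl -addbA (addbC (c k.*2 && _)).
Qed.

Lemma K0 w i : ~~ odd w && odd 'C(w, i) = if odd i then false else odd 'C(w, i) (+) odd 'C(w, i.+1).
Proof.
have -> : ~~ odd w && odd 'C(w, i) = odd 'C(w, i) (+) (odd w && odd 'C(w, i)).
  by case: (odd w); case: (odd 'C(w, i)).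
by rewrite K1; case: (odd i); rewrite ?addbb.
Qed.

Lemma Leven w c k : ~~ odd w && Bs w c k.*2 = Bs w (fun i => c (i./2).*2) k.*2.
Proof.
elim: k => [|k IH]; first by rewrite /Bs !big_ord0 andbF.
rewrite doubleS /Bs !big_ord_recr /=.
rewrite /Bs in IH; rewrite !andb_addr IH.
rewrite !(andbCA (~~ odd w)) !K0 /= odd_double /= doubleK uphalf_double.
by rewrite andbF addbF andb_addr addbA.
Qed.

Lemma interval_card (T0 : finType) (U S : {set T0}) : U \subset S ->
  #|[set T : {set T0} | (U \subset T) && (T \subset S)]| = 2 ^ #|S :\: U|.
Proof.
move=> US.
have -> : [set T : {set T0} | (U \subset T) && (T \subset S)] =
          (fun V => V :|: U) @: powerset (S :\: U).
  apply/setP => T; rewrite !inE; apply/andP/imsetP.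
    case=> /subsetP UT TS; exists (T :\: U); first by rewrite powersetE setSD.
    apply/setP => x; rewrite !inE; case xU: (x \in U); rewrite ?orbT ?orbF //=.
    by rewrite UT.
  case=> V; rewrite powersetE => /subsetP VS ->; split; first exact: subsetUr.
  apply/subsetP => x; rewrite inE; case/orP; last by move/(subsetP US).
  by move/VS; rewrite inE => /andP[].
rewrite card_in_imset ?card_powerset //.
move=> V1 V2; rewrite !powersetE => /subsetP H1 /subsetP H2 E; apply/setP => x.
have := congr1 (fun A : {set T0} => x \in A) E; rewrite /= !inE.
case h1: (x \in V1); case h2: (x \in V2) => //=.
  by move: (H1 x h1); rewrite inE => /andP[/negbTE -> _].
by move: (H2 x h2); rewrite inE => /andP[/negbTE -> _].
Qed.

Lemma parity_interval (T0 : finType) (U S : {set T0}) :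
  \big[addb/false]_(T : {set T0} | T \subset S) (U \subset T) = (U == S).
Proof.
rewrite addb_card.
case US: (U \subset S).
  rewrite (eq_card (B := [set T : {set T0} | (U \subset T) && (T \subset S)])); last first.
    by move=> T; rewrite !inE andbC.
  rewrite interval_card // oddX orbF cards_eq0 setD_eq0 eqEsubset US.
  by [].
rewrite eq_card0; last first.
  move=> T; rewrite !inE; apply/negbTE/negP => /andP[TS UT].
  by move: US; rewrite (subset_trans UT TS).
by apply/esym/negbTE/eqP => E; move: US; rewrite E subxx.
Qed.

Lemma ind_set n (T : {set 'I_n}) : [set j | ind T j] = T.
Proof. by apply/setP => j; rewrite !inE ffunE. Qed.

Lemma anf_sigma n i (S : {set 'I_n}) : anf (sigma n i) S = (#|S| == i).
Proof.
rewrite /anf.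
under eq_bigr => T _.
  rewrite ffunE.
  under eq_bigr => U _ do rewrite monomE ind_set.
  over.
rewrite exchange_big /=.
under eq_bigr => U _ do rewrite parity_interval.
rewrite addb_card.
case: (eqVneq #|S| i) => H.
  rewrite (eq_card (B := pred1 S)) ?card1 // => U; rewrite !inE.
  by apply/andb_idl => /eqP ->; rewrite H.
rewrite eq_card0 // => U; rewrite !inE; apply/negbTE/negP => /andP[/eqP E1 /eqP E].
by rewrite -E1 E eqxx in H.
Qed.

Lemma sym_combE n c m (x : pt n) : sym_comb n c m x = Bs (wt x) c m.
Proof. by rewrite ffunE /Bs; apply: eq_bigr => i _; rewrite sigmaE. Qed.

Lemma sum_eq_card (c : nat -> bool) m (k : nat) :
  \big[addb/false]_(i < m) (c i && (k == i :> nat)) = (k < m) && c k.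
Proof.
elim: m => [|m IH]; first by rewrite big_ord0.
rewrite big_ord_recr /= IH.
case: (ltngtP k m) => [km|mk|->].
- by rewrite andbF addbF ltnS (ltnW km).
- by rewrite andbF addbF ltnS leqNgt mk.
- by rewrite andbT ltnSn.
Qed.

Lemma anf_sym n c m (S : {set 'I_n}) : anf (sym_comb n c m) S = (#|S| < m) && c #|S|.
Proof.
rewrite /anf.
under eq_bigr => T _ do rewrite ffunE.
rewrite exchange_big /= -sum_eq_card.
apply: eq_bigr => i _; case: (c i) => /=; last by rewrite big1.
by rewrite -anf_sigma.
Qed.

Lemma sym_zero n c m : (forall i, i < m -> c i = false) -> sym_comb n c m = bf0 n.
Proof.
move=> H; apply/ffunP => x; rewrite ffunE [RHS]ffunE big1 // => i _.
by rewrite H.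
Qed.

Lemma sym_deg_le n c m : deg (sym_comb n c m) <= m - 1.
Proof.
apply/bigmax_leqP => S; rewrite anf_sym => /andP[Sm _].
by rewrite subn1 -ltnS (ltn_predK Sm).
Qed.

Lemma exists_card n k : k <= n -> exists S : {set 'I_n}, #|S| = k.
Proof.
move=> kn.
have : 0 < #|[set A : {set 'I_n} | #|A| == k]| by rewrite card_draws card_ord bin_gt0.
by case/card_gt0P => S; rewrite inE => /eqP; exists S.
Qed.

Lemma anf0 n (S : {set 'I_n}) : anf (bf0 n) S = false.
Proof. by rewrite /anf big1 // => T _; rewrite ffunE. Qed.

Lemma sym_exact n (c : nat -> bool) m k : k < m -> k <= n -> c k ->
  (forall i, k < i < m -> c i = false) ->
  sym_comb n c m <> bf0 n /\ deg (sym_comb n c m) = k.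
Proof.
move=> km kn ck H; have [S0 HS0] := exists_card kn.
have A0 : anf (sym_comb n c m) S0 by rewrite anf_sym HS0 km ck.
split.
  by move=> E; move: A0; rewrite E anf0.
apply/eqP; rewrite eqn_leq; apply/andP; split.
  apply/bigmax_leqP => S; rewrite anf_sym => /andP[Sm cS].
  rewrite leqNgt; apply/negP => kS.
  by move: (H #|S|); rewrite kS Sm cS => /(_ isT).
by rewrite -HS0; apply: leq_bigmax_cond.
Qed.

Lemma bf_addE n (F G : BF n) x : bf_add F G x = F x (+) G x.
Proof. by rewrite ffunE. Qed.
Lemma bf_mulE n (F G : BF n) x : bf_mul F G x = F x && G x.
Proof. by rewrite ffunE. Qed.
Lemma bf_constE n b x : bf_const n b x = b.
Proof. by rewrite ffunE. Qed.

Lemma Bs_trunc w c d m : (forall i, i < m -> c i = d i) -> c m = false -> c m.+1 = false ->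
  Bs w c m.+2 = Bs w d m.
Proof.
move=> H H0 H1; rewrite /Bs !big_ord_recr /= H0 H1 !addbF.
by apply: eq_bigr => i _; rewrite H.
Qed.

Definition lf t (lam : nat -> bool) i := if i == t.*2.+1 then true else lam i.

Lemma fE n t lam (x : pt n) :
  bf_add (sigma n t.*2.+1) (sym_comb n lam t.*2.+1) x = Bs (wt x) (lf t lam) (t.+1).*2.
Proof.
rewrite bf_addE sigmaE sym_combE doubleS /Bs [in RHS]big_ord_recr /= /lf eqxx /= addbC.
congr addb; apply: eq_bigr => i _; by rewrite ltn_eqF.
Qed.

Lemma HAp n t lam (x : pt n) : lam t.*2 = false ->
  ~~ odd (wt x) && Bs (wt x) (lf t lam) (t.+1).*2 = Bs (wt x) (fun i => lam (i./2).*2) t.*2.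
Proof.
move=> L; rewrite Leven doubleS; apply: Bs_trunc.
- move=> i it; rewrite /lf ltn_eqF //; apply: (leq_ltn_trans _ (leqW it)).
  by rewrite -{2}(odd_double_half i) leq_addl.
- by rewrite doubleK /lf (ltn_eqF (ltnSn _)).
- by rewrite /= uphalf_double /lf (ltn_eqF (ltnSn _)).
Qed.

Lemma HBp n t lam (x : pt n) : lam t.*2 = true ->
  odd (wt x) && Bs (wt x) (lf t lam) (t.+1).*2 =
  Bs (wt x) (fun i => odd i && (lam i (+) lam i.-1)) t.*2.
Proof.
move=> L; rewrite Lodd doubleS; apply: Bs_trunc.
- move=> i it; rewrite /lf (ltn_eqF (leqW it)) (ltn_eqF (_ : i.-1 < t.*2.+1)) //.
  exact: leq_ltn_trans (leq_pred i) (leqW it).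
- by rewrite odd_double.
- by rewrite /lf /= eqxx (ltn_eqF (ltnSn _)) L andbF.
Qed.

Theorem theorem3 (n t : nat) (lam : nat -> bool) (Hn : 2 * t + 1 <= n) :
  let f : BF n := bf_add (sigma n (2 * t + 1)) (sym_comb n lam (2 * t + 1)) in
  let g : BF n := bf_add (sigma n 1) (bf_const n (lam (2 * t) (+) true)) in
  [/\ (t = 0 -> bf_mul g f = bf0 n),
      (0 < t -> deg (bf_mul g f) <= 2 * t - 1),
      (lam (2 * t) = false ->
        let h := bf_mul (bf_add (sigma n 1) (bf_const n true)) f in
        ((forall s, s < t -> lam (2 * s) = false) -> h = bf0 n) /\
        (forall s, s < t -> lam (2 * s) = true ->
           (forall s', s < s' < t -> lam (2 * s') = false) ->
           h <> bf0 n /\ deg h = 2 * s + 1))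
    & (lam (2 * t) = true ->
        let h := bf_mul (sigma n 1) f in
        ((forall s, s < t -> lam (2 * s) = lam (2 * s + 1)) -> h = bf0 n) /\
        (forall s, s < t -> lam (2 * s) (+) lam (2 * s + 1) = true ->
           (forall s', s < s' < t -> lam (2 * s') = lam (2 * s' + 1)) ->
           h <> bf0 n /\ deg h = 2 * s + 1))].
Proof.
rewrite !mul2n !addn1 in Hn *.
move=> f g.
have Hs1 : forall x, sigma n 1 x = odd (wt x) by move=> x; rewrite sigmaE bin1.
have HA : lam t.*2 = false ->
   bf_mul (bf_add (sigma n 1) (bf_const n true)) f = sym_comb n (fun i => lam (i./2).*2) t.*2.
  move=> L; apply/ffunP => x; rewrite bf_mulE bf_addE bf_constE Hs1 addbT fE HAp //.
  by rewrite sym_combE.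
have HB : lam t.*2 = true ->
   bf_mul (sigma n 1) f = sym_comb n (fun i => odd i && (lam i (+) lam i.-1)) t.*2.
  move=> L; apply/ffunP => x; rewrite bf_mulE Hs1 fE HBp //.
  by rewrite sym_combE.
have Hg : bf_mul g f = sym_comb n (if lam t.*2 then (fun i => odd i && (lam i (+) lam i.-1))
                                   else (fun i => lam (i./2).*2)) t.*2.
  case L: (lam t.*2); [rewrite -HB // | rewrite -HA //];
    apply/ffunP => x; by rewrite !bf_mulE !bf_addE !bf_constE L /= ?addbF.
split.
- by move=> t0; rewrite Hg t0; apply: sym_zero.
- by move=> _; rewrite Hg; apply: sym_deg_le.
- move=> L h; rewrite /h HA //; split.
    move=> Hz; apply: sym_zero => i it; rewrite -mul2n; apply: Hz.
    by rewrite ltn_half_double.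
  move=> s st ls Hs'; rewrite mul2n addn1.
  apply: sym_exact.
  + by rewrite ltn_Sdouble.
  + by apply: (leq_trans _ (ltnW Hn)); apply: ltnW; rewrite ltn_Sdouble.
  + by rewrite /= uphalf_double -mul2n.
  + move=> i /andP[si it]; rewrite -mul2n; apply: Hs'.
    by rewrite gtn_half_double si ltn_half_double.
- move=> L h; rewrite /h HB //; split.
    move=> Hz; apply: sym_zero => i it.
    case oi: (odd i) => //=.
    have Ei : i = (i./2).*2.+1 by rewrite -{1}(odd_double_half i) oi.
    have := Hz (i./2); rewrite ltn_half_double it mul2n addn1 => /(_ isT) E.
    by rewrite Ei /= E addbb.
  move=> s st ls Hs'; rewrite mul2n addn1.
  apply: sym_exact.
  + by rewrite ltn_Sdouble.
  + by apply: (leq_trans _ (ltnW Hn)); apply: ltnW; rewrite ltn_Sdouble.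
  + by move: ls; rewrite /= odd_double /= addbC mul2n addn1.
  + move=> i /andP[si it].
    case oi: (odd i) => //=.
    have Ei : i = (i./2).*2.+1 by rewrite -{1}(odd_double_half i) oi.
    have := Hs' (i./2); rewrite gtn_half_double ltn_half_double si it mul2n addn1.
    move=> /(_ isT) E.
    by rewrite Ei /= E addbb.
Qed.
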